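(* A dual-convex $m\times n$ net in $I^3$ is flexible in $I^3$ if and only if it has a nontrivial isotropic isometric deformation consisting of $m\times n$ nets that are v-parallel to it.
   Context: $I^3$ is $\mathbb{R}^3$ with coordinates $(x,y,z)$; isotropic = parallel to the $z$-axis; top view $\overline P$ of $P=(x,y,z)$ is $(x,y)$. Isotropic congruences: maps $\mathbf{x}\mapsto A\mathbf{x}+\mathbf{b}$, $A=\begin{pmatrix}\cos\phi&-\sin\phi&0\\ \sin\phi&\cos\phi&0\\ c_1&c_2&1\end{pmatrix}$. Metric duality: point $P=(P^1,P^2,P^3)\leftrightarrow$ plane $P^*\colon z=P^1x+P^2y-P^3$. An $m\times n$ net: points $F_{ij}$, $0\le i\le m,0\le j\le n$, with $F_{ij},F_{i+1,j},F_{i+1,j+1},F_{i,j+1}$ consecutive vertices of a convex planar quadrilateral (face $p_{ij}$) for all $0\le i<m,0\le j<n$. Boundary vertices: $i\in\{0,m\}$ or $j\in\{0,n\}$; consecutive faces around non-boundary $F_{ij}$: $p_{i-1,j-1},p_{i,j-1},p_{ij},p_{i-1,j}$. Convex 4-hedral angle with vertex $O$: union of rays from $O$ meeting a convex quadrilateral in a plane not through $O$; flat angles: rays through one side; admissible: isotropic line through $O$ meets its interior. Dual-convex: $m,n\ge2$ and at each non-boundary vertex the four consecutive face planes are planes of four consecutive flat angles of an admissible convex 4-hedral angle. Two nets are v-parallel if vertices with equal indices have equal top views. Curvature at non-boundary vertex with consecutive faces $p_1..p_4$: $\Omega=\frac12\sum_{k=1}^4\det(\overline{p_k^*},\overline{p_{k+1}^*})$,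 $p_5=p_1$. An isotropic isometric deformation of a dual-convex net $F_{ij}$ is a continuous family of $m\times n$ nets $F_{ij}(t)$, $t\in[0,1]$, $F_{ij}(0)=F_{ij}$, with corresponding faces isotropically congruent and equal curvatures at corresponding non-boundary vertices; trivial if for each $t$ there is an isotropic congruence $C_t$ with $F_{ij}(t)=C_t(F_{ij})$ for all $i,j$. Flexible in $I^3$: has a nontrivial isotropic isometric deformation. *)

(* Defs.v *)
From HB Require Import structures.
From mathcomp Require Import all_boot all_order all_algebra.
From mathcomp Require Import all_classical all_reals all_analysis.
Set Implicit Arguments. Unset Strict Implicit. Unset Printing Implicit Defensive.
Import Order.TTheory GRing.Theory Num.Theory numFieldNormedType.Exports.
Local Open Scope ring_scope.
Local Open Scope classical_set_scope.

Section IsotropicNets.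
Variable R : realType.

(** Points of I^3 = R^3 with coordinates (x,y,z); the z-axis is isotropic. *)
Record pt := Pt { px : R; py : R; pz : R }.

Definition psub (p q : pt) : pt := Pt (px p - px q) (py p - py q) (pz p - pz q).
Definition pscale (a : R) (p : pt) : pt := Pt (a * px p) (a * py p) (a * pz p).
Definition dot (p q : pt) : R := px p * px q + py p * py q + pz p * pz q.
Definition cross (u v : pt) : pt :=
  Pt (py u * pz v - pz u * py v) (pz u * px v - px u * pz v) (px u * py v - py u * px v).

(** P1,P2,P3,P4 are consecutive vertices of a (non-degenerate) convex planar
    quadrilateral: all turning vectors e_k x e_(k+1) of consecutive edges are
    nonzero positive multiples of one and the same vector (this forces the
    four points to be coplanar and the quadrilateral to be strictly convex). *)
Definition convex_quad (P1 P2 P3 P4 : pt) : Prop :=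
  let e1 := psub P2 P1 in let e2 := psub P3 P2 in
  let e3 := psub P4 P3 in let e4 := psub P1 P4 in
  let N := cross e1 e2 in
  N <> Pt 0 0 0 /\
  exists l2 l3 l4 : R, 0 < l2 /\ 0 < l3 /\ 0 < l4 /\
    cross e2 e3 = pscale l2 N /\ cross e3 e4 = pscale l3 N /\
    cross e4 e1 = pscale l4 N.

Definition in_plane3 (A B C X : pt) : Prop :=
  dot (cross (psub B A) (psub C A)) (psub X A) = 0.

(** A net: vertices F i j, used for 0 <= i <= m, 0 <= j <= n. *)
Definition net := nat -> nat -> pt.

Definition is_net (m n : nat) (F : net) : Prop :=
  forall i j, (i < m)%N -> (j < n)%N ->
    convex_quad (F i j) (F i.+1 j) (F i.+1 j.+1) (F i j.+1).

Definition nonboundary (m n i j : nat) : Prop :=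
  (0 < i)%N /\ (i < m)%N /\ (0 < j)%N /\ (j < n)%N.

Definition face_plane (F : net) (i j : nat) (X : pt) : Prop :=
  in_plane3 (F i j) (F i.+1 j) (F i.+1 j.+1) X.

(** The metric dual point p^* of the (non-isotropic) plane of face p_ij:
    the plane is z = a x + b y - c and p^* = (a, b, c). *)
Definition face_dual (F : net) (i j : nat) : pt :=
  let P := F i j in
  let N := cross (psub (F i.+1 j) P) (psub (F i.+1 j.+1) P) in
  Pt (- px N / pz N) (- py N / pz N) (- dot N P / pz N).

Definition det_top (p q : pt) : R := px p * py q - py p * px q.

Definition curvature (F : net) (i j : nat) : R :=
  let d1 := face_dual F i.-1 j.-1 in let d2 := face_dual F i j.-1 in
  let d3 := face_dual F i j in let d4 := face_dual F i.-1 j in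
  2^-1 * (det_top d1 d2 + det_top d2 d3 + det_top d3 d4 + det_top d4 d1).

(** Convex 4-hedral angle with vertex O over the convex quadrilateral
    Q1Q2Q3Q4 (in a plane not through O) is admissible: the isotropic line
    through O meets its interior, i.e. some point O + s e_z, s <> 0, equals
    O + lam (X - O) with lam > 0 and X in the interior of the quadrilateral
    (X a convex combination of Q1..Q4 with strictly positive weights). *)
Definition admissible_angle (O Q1 Q2 Q3 Q4 : pt) : Prop :=
  convex_quad Q1 Q2 Q3 Q4 /\ ~ in_plane3 Q1 Q2 Q3 O /\
  exists s lam w1 w2 w3 w4 : R,
    s != 0 /\ 0 < lam /\ 0 < w1 /\ 0 < w2 /\ 0 < w3 /\ 0 < w4 /\
    w1 + w2 + w3 + w4 = 1 /\
    let X := Pt (w1 * px Q1 + w2 * px Q2 + w3 * px Q3 + w4 * px Q4)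
                (w1 * py Q1 + w2 * py Q2 + w3 * py Q3 + w4 * py Q4)
                (w1 * pz Q1 + w2 * pz Q2 + w3 * pz Q3 + w4 * pz Q4) in
    Pt (px O) (py O) (pz O + s) =
    Pt (px O + lam * (px X - px O)) (py O + lam * (py X - py O))
       (pz O + lam * (pz X - pz O)).

(** Dual-convex m x n net. The flat angles of the 4-hedral angle are the
    cones over the sides Q1Q2, Q2Q3, Q3Q4, Q4Q1; their planes are the planes
    through O and the side. *)
Definition dual_convex (m n : nat) (F : net) : Prop :=
  is_net m n F /\ (2 <= m)%N /\ (2 <= n)%N /\
  forall i j, nonboundary m n i j ->
    exists Q1 Q2 Q3 Q4 : pt,
      admissible_angle (F i j) Q1 Q2 Q3 Q4 /\
      (forall X, face_plane F i.-1 j.-1 X <-> in_plane3 (F i j) Q1 Q2 X) /\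
      (forall X, face_plane F i j.-1 X <-> in_plane3 (F i j) Q2 Q3 X) /\
      (forall X, face_plane F i j X <-> in_plane3 (F i j) Q3 Q4 X) /\
      (forall X, face_plane F i.-1 j X <-> in_plane3 (F i j) Q4 Q1 X).

Definition cong_map (phi c1 c2 b1 b2 b3 : R) (p : pt) : pt :=
  Pt (cos phi * px p - sin phi * py p + b1)
     (sin phi * px p + cos phi * py p + b2)
     (c1 * px p + c2 * py p + pz p + b3).

Definition is_iso_cong (f : pt -> pt) : Prop :=
  exists phi c1 c2 b1 b2 b3 : R, forall p, f p = cong_map phi c1 c2 b1 b2 b3 p.

Definition faces_congruent (F G : net) (i j : nat) : Prop :=
  exists f, is_iso_cong f /\
    f (F i j) = G i j /\ f (F i.+1 j) = G i.+1 j /\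
    f (F i.+1 j.+1) = G i.+1 j.+1 /\ f (F i j.+1) = G i j.+1.

Definition unit_int : set R := [set t | 0 <= t <= 1].

Definition iso_isometric_deformation (m n : nat) (F : net) (Ft : R -> net) : Prop :=
  (forall i j, (i <= m)%N -> (j <= n)%N -> Ft 0 i j = F i j) /\
  (forall i j, (i <= m)%N -> (j <= n)%N ->
     {within unit_int, continuous (fun t => px (Ft t i j))} /\
     {within unit_int, continuous (fun t => py (Ft t i j))} /\
     {within unit_int, continuous (fun t => pz (Ft t i j))}) /\
  (forall t, 0 <= t <= 1 ->
     is_net m n (Ft t) /\
     (forall i j, (i < m)%N -> (j < n)%N -> faces_congruent F (Ft t) i j) /\
     (forall i j, nonboundary m n i j -> curvature (Ft t) i j = curvature F i j)).

Definition trivial_deformation (m n : nat) (F : net) (Ft : R -> net) : Prop :=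
  forall t, 0 <= t <= 1 ->
    exists f, is_iso_cong f /\
      forall i j, (i <= m)%N -> (j <= n)%N -> Ft t i j = f (F i j).

Definition flexible (m n : nat) (F : net) : Prop :=
  exists Ft, iso_isometric_deformation m n F Ft /\ ~ trivial_deformation m n F Ft.

Definition v_parallel (m n : nat) (F G : net) : Prop :=
  forall i j, (i <= m)%N -> (j <= n)%N ->
    px (G i j) = px (F i j) /\ py (G i j) = py (F i j).

End IsotropicNets.

(* Main.v *)
Require Import Defs.
From mathcomp Require Import all_boot all_order all_algebra.
From mathcomp Require Import all_classical all_reals all_analysis.
From mathcomp Require Import ring lra zify.
Set Implicit Arguments. Unset Strict Implicit. Unset Printing Implicit Defensive.
Import Order.TTheory GRing.Theory Num.Theory numFieldNormedType.Exports.
Local Open Scope ring_scope.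

Definition sh {R : realType} (c1 c2 b3 : R) (p : pt R) : pt R :=
  Pt (px p) (py p) (c1 * px p + c2 * py p + pz p + b3).
Definition shN {R : realType} (c1 c2 : R) (N : pt R) : pt R :=
  Pt (px N - c1 * pz N) (py N - c2 * pz N) (pz N).

Lemma cross_sh {R : realType} (c1 c2 b3 : R) (A B C D : pt R) :
  cross (psub (sh c1 c2 b3 A) (sh c1 c2 b3 B)) (psub (sh c1 c2 b3 C) (sh c1 c2 b3 D))
  = shN c1 c2 (cross (psub A B) (psub C D)).
Proof.
case: A => ? ? ?; case: B => ? ? ?; case: C => ? ? ?; case: D => ? ? ?.
rewrite /cross /psub /sh /shN /=; congr Pt; ring.
Qed.

Lemma shN_scale {R : realType} (c1 c2 l : R) (N : pt R) :
  shN c1 c2 (pscale l N) = pscale l (shN c1 c2 N).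
Proof. case: N => ? ? ?; rewrite /shN /pscale /=; congr Pt; ring. Qed.

Lemma shN_nz {R : realType} (c1 c2 : R) (N : pt R) :
  N <> Pt 0 0 0 -> shN c1 c2 N <> Pt 0 0 0.
Proof.
case: N => x y z; rewrite /shN /= => hN [] hx hy hz; apply: hN.
rewrite hz in hx hy *; rewrite !mulr0 !subr0 in hx hy; by rewrite hx hy.
Qed.

Lemma convex_quad_sh {R : realType} (c1 c2 b3 : R) (P1 P2 P3 P4 : pt R) :
  convex_quad P1 P2 P3 P4 ->
  convex_quad (sh c1 c2 b3 P1) (sh c1 c2 b3 P2) (sh c1 c2 b3 P3) (sh c1 c2 b3 P4).
Proof.
rewrite /convex_quad /= !cross_sh => -[hN [l2 [l3 [l4 [h2 [h3 [h4 [e2 [e3 e4]]]]]]]]].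
split; first exact: shN_nz.
exists l2, l3, l4; rewrite e2 e3 e4 !shN_scale; by [].
Qed.

Definition Tr {R : realType} (c s b1 b2 : R) (p : pt R) : pt R :=
  Pt (c * px p - s * py p + b1) (s * px p + c * py p + b2) (pz p).
Definition RotN {R : realType} (c s : R) (N : pt R) : pt R :=
  Pt (c * px N - s * py N) (s * px N + c * py N) (pz N).

Lemma cross_Tr {R : realType} (c s b1 b2 : R) (A B C D : pt R) :
  c ^+ 2 + s ^+ 2 = 1 ->
  cross (psub (Tr c s b1 b2 A) (Tr c s b1 b2 B)) (psub (Tr c s b1 b2 C) (Tr c s b1 b2 D))
  = RotN c s (cross (psub A B) (psub C D)).
Proof.
move=> hcs.
case: A => ? ? ?; case: B => ? ? ?; case: C => ? ? ?; case: D => ? ? ?.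
rewrite /cross /psub /Tr /RotN /=; congr Pt; try ring.
rewrite -[RHS]mul1r -hcs; ring.
Qed.

Definition fdual {R : realType} (A B C : pt R) : pt R :=
  let N := cross (psub B A) (psub C A) in
  Pt (- px N / pz N) (- py N / pz N) (- dot N A / pz N).

Lemma face_dualE {R : realType} (F : net R) i j :
  face_dual F i j = fdual (F i j) (F i.+1 j) (F i.+1 j.+1).
Proof. by []. Qed.

Lemma fdual_Tr {R : realType} (c s b1 b2 : R) (A B C : pt R) :
  c ^+ 2 + s ^+ 2 = 1 ->
  px (fdual (Tr c s b1 b2 A) (Tr c s b1 b2 B) (Tr c s b1 b2 C)) =
    c * px (fdual A B C) - s * py (fdual A B C) /\
  py (fdual (Tr c s b1 b2 A) (Tr c s b1 b2 B) (Tr c s b1 b2 C)) =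
    s * px (fdual A B C) + c * py (fdual A B C).
Proof.
move=> hcs; rewrite /fdual !cross_Tr //=.
rewrite /RotN /=; split; ring.
Qed.

Lemma det_top_rot {R : realType} (c s : R) (p q p' q' : pt R) :
  c ^+ 2 + s ^+ 2 = 1 ->
  px p' = c * px p - s * py p -> py p' = s * px p + c * py p ->
  px q' = c * px q - s * py q -> py q' = s * px q + c * py q ->
  det_top p' q' = det_top p q.
Proof.
move=> hcs h1 h2 h3 h4; rewrite /det_top h1 h2 h3 h4.
rewrite -[RHS]mul1r -hcs; ring.
Qed.


Lemma dotX {R : realType} (xo yo zo x1 y1 z1 x2 y2 z2 x3 y3 z3 x4 y4 z4
  w1 w2 w3 w4 lam s mx my mz : R) :
  w1 + w2 + w3 + w4 = 1 ->
  xo = xo + lam * (w1 * x1 + w2 * x2 + w3 * x3 + w4 * x4 - xo) ->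
  yo = yo + lam * (w1 * y1 + w2 * y2 + w3 * y3 + w4 * y4 - yo) ->
  zo + s = zo + lam * (w1 * z1 + w2 * z2 + w3 * z3 + w4 * z4 - zo) ->
  mz * s = lam * (w1 * (mx * (x1 - xo) + my * (y1 - yo) + mz * (z1 - zo)) +
                  w2 * (mx * (x2 - xo) + my * (y2 - yo) + mz * (z2 - zo)) +
                  w3 * (mx * (x3 - xo) + my * (y3 - yo) + mz * (z3 - zo)) +
                  w4 * (mx * (x4 - xo) + my * (y4 - yo) + mz * (z4 - zo))).
Proof.
move=> hw hx hy hz.
have h1 := congr1 (fun t => mx * t) hx.
have h2 := congr1 (fun t => my * t) hy.
have h3 := congr1 (fun t => mz * t) hz.
have h4 := congr1 (fun t => lam * (mx * xo + my * yo + mz * zo) * t) hw.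
simpl in h1, h2, h3, h4. lra.
Qed.

Lemma dot_self {R : realType} (N X : pt R) : dot N (psub X X) = 0.
Proof. case: N => ? ? ?; case: X => ? ? ?; rewrite /dot /psub /=; ring. Qed.

Lemma dot_up {R : realType} (N X P : pt R) :
  dot N (psub (Pt (px X) (py X) (pz X + 1)) P) = dot N (psub X P) + pz N.
Proof. case: N => ? ? ?; case: X => ? ? ?; case: P => ? ? ?; rewrite /dot /psub /=; ring. Qed.

Lemma dot_up0 {R : realType} (N X : pt R) :
  dot N (psub (Pt (px X) (py X) (pz X + 1)) X) = pz N.
Proof. case: N => ? ? ?; case: X => ? ? ?; rewrite /dot /psub /=; ring. Qed.

Lemma plane_nv {R : realType} (P1 P2 P3 O A B : pt R) :
  (forall X, in_plane3 P1 P2 P3 X <-> in_plane3 O A B X) ->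
  pz (cross (psub A O) (psub B O)) != 0 ->
  pz (cross (psub P2 P1) (psub P3 P1)) != 0.
Proof.
move=> H hM; apply/negP => /eqP hz.
have hO : in_plane3 P1 P2 P3 O.
  by apply/H; rewrite /in_plane3 dot_self.
have hO' : in_plane3 P1 P2 P3 (Pt (px O) (py O) (pz O + 1)).
  by move: hO; rewrite /in_plane3 dot_up hz addr0.
move/H: hO'; rewrite /in_plane3 dot_up0 => h; by rewrite h eqxx in hM.
Qed.

Definition det3 {R : realType} (ax ay az bx by' bz cx cy cz : R) : R :=
  ax * (by' * cz - bz * cy) - ay * (bx * cz - bz * cx) + az * (bx * cy - by' * cx).

Lemma angle_nv {R : realType} (O Q1 Q2 Q3 Q4 : pt R) :
  admissible_angle O Q1 Q2 Q3 Q4 ->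
  pz (cross (psub Q1 O) (psub Q2 O)) != 0 /\ pz (cross (psub Q2 O) (psub Q3 O)) != 0 /\ pz (cross (psub Q3 O) (psub Q4 O)) != 0 /\ pz (cross (psub Q4 O) (psub Q1 O)) != 0.
Proof.
case: O => xo yo zo; case: Q1 => x1 y1 z1; case: Q2 => x2 y2 z2;
case: Q3 => x3 y3 z3; case: Q4 => x4 y4 z4.
rewrite /admissible_angle /convex_quad /in_plane3 /=.
move=> -[[_ [l2 [l3 [l4 [hl2 [hl3 [hl4 [h2 [h3 h4]]]]]]]]]
  [hnp [s [lam [w1 [w2 [w3 [w4 [hs [hlam [hw1 [hw2 [hw3 [hw4 [hw hX]]]]]]]]]]]]]]].
case: h2 => h2x h2y h2z; case: h3 => h3x h3y h3z; case: h4 => h4x h4y h4z.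
case: hX => hx hy hz.
set D := (det3 (x1 - xo) (y1 - yo) (z1 - zo) (x2 - xo) (y2 - yo) (z2 - zo) (x3 - xo) (y3 - yo) (z3 - zo)).
have h4x' := congr1 (fun t => (x1 - xo) * t) h4x.
have h4y' := congr1 (fun t => (y1 - yo) * t) h4y.
have h4z' := congr1 (fun t => (z1 - zo) * t) h4z.
have j124 : (det3 (x1 - xo) (y1 - yo) (z1 - zo) (x2 - xo) (y2 - yo) (z2 - zo) (x4 - xo) (y4 - yo) (z4 - zo)) = l4 * D.
  rewrite /D; simpl in h4x', h4y', h4z'; rewrite /det3; lra.
have h2x' := congr1 (fun t => (x2 - xo) * t) h2x.
have h2y' := congr1 (fun t => (y2 - yo) * t) h2y.
have h2z' := congr1 (fun t => (z2 - zo) * t) h2z.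
have j234 : (det3 (x2 - xo) (y2 - yo) (z2 - zo) (x3 - xo) (y3 - yo) (z3 - zo) (x4 - xo) (y4 - yo) (z4 - zo)) = l2 * D.
  rewrite /D; simpl in h2x', h2y', h2z'; rewrite /det3; lra.
have h3x' := congr1 (fun t => (x3 - xo) * t) h3x.
have h3y' := congr1 (fun t => (y3 - yo) * t) h3y.
have h3z' := congr1 (fun t => (z3 - zo) * t) h3z.
have j341 : (det3 (x3 - xo) (y3 - yo) (z3 - zo) (x4 - xo) (y4 - yo) (z4 - zo) (x1 - xo) (y1 - yo) (z1 - zo)) = l3 * D.
  rewrite /D; simpl in h3x', h3y', h3z'; rewrite /det3; lra.
have j231 : (det3 (x2 - xo) (y2 - yo) (z2 - zo) (x3 - xo) (y3 - yo) (z3 - zo) (x1 - xo) (y1 - yo) (z1 - zo)) = D by rewrite /D /det3; ring.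
have j342 : (det3 (x3 - xo) (y3 - yo) (z3 - zo) (x4 - xo) (y4 - yo) (z4 - zo) (x2 - xo) (y2 - yo) (z2 - zo)) = l2 * D by rewrite -j234 /det3; ring.
have j412 : (det3 (x4 - xo) (y4 - yo) (z4 - zo) (x1 - xo) (y1 - yo) (z1 - zo) (x2 - xo) (y2 - yo) (z2 - zo)) = l4 * D by rewrite -j124 /det3; ring.
have j413 : (det3 (x4 - xo) (y4 - yo) (z4 - zo) (x1 - xo) (y1 - yo) (z1 - zo) (x3 - xo) (y3 - yo) (z3 - zo)) = l3 * D by rewrite -j341 /det3; ring.
have k12 : ((x1 - xo) * (y2 - yo) - (y1 - yo) * (x2 - xo)) * s = lam * ((w3 * 1 + w4 * l4) * D).
  have := @dotX R xo yo zo x1 y1 z1 x2 y2 z2 x3 y3 z3 x4 y4 z4 w1 w2 w3 w4 lam s ((y1 - yo) * (z2 - zo) - (z1 - zo) * (y2 - yo)) ((z1 - zo) * (x2 - xo) - (x1 - xo) * (z2 - zo)) ((x1 - xo) * (y2 - yo) - (y1 - yo) * (x2 - xo)) hw hx hy hz.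
  move=> ->; congr (lam * _).
  transitivity (w3 * (det3 (x1 - xo) (y1 - yo) (z1 - zo) (x2 - xo) (y2 - yo) (z2 - zo) (x3 - xo) (y3 - yo) (z3 - zo)) + w4 * (det3 (x1 - xo) (y1 - yo) (z1 - zo) (x2 - xo) (y2 - yo) (z2 - zo) (x4 - xo) (y4 - yo) (z4 - zo))); first by rewrite /det3; ring.
  rewrite j124 /D; ring.
have k23 : ((x2 - xo) * (y3 - yo) - (y2 - yo) * (x3 - xo)) * s = lam * ((w1 * 1 + w4 * l2) * D).
  have := @dotX R xo yo zo x1 y1 z1 x2 y2 z2 x3 y3 z3 x4 y4 z4 w1 w2 w3 w4 lam s ((y2 - yo) * (z3 - zo) - (z2 - zo) * (y3 - yo)) ((z2 - zo) * (x3 - xo) - (x2 - xo) * (z3 - zo)) ((x2 - xo) * (y3 - yo) - (y2 - yo) * (x3 - xo)) hw hx hy hz.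
  move=> ->; congr (lam * _).
  transitivity (w1 * (det3 (x2 - xo) (y2 - yo) (z2 - zo) (x3 - xo) (y3 - yo) (z3 - zo) (x1 - xo) (y1 - yo) (z1 - zo)) + w4 * (det3 (x2 - xo) (y2 - yo) (z2 - zo) (x3 - xo) (y3 - yo) (z3 - zo) (x4 - xo) (y4 - yo) (z4 - zo))); first by rewrite /det3; ring.
  rewrite j231 j234 /D; ring.
have k34 : ((x3 - xo) * (y4 - yo) - (y3 - yo) * (x4 - xo)) * s = lam * ((w1 * l3 + w2 * l2) * D).
  have := @dotX R xo yo zo x1 y1 z1 x2 y2 z2 x3 y3 z3 x4 y4 z4 w1 w2 w3 w4 lam s ((y3 - yo) * (z4 - zo) - (z3 - zo) * (y4 - yo)) ((z3 - zo) * (x4 - xo) - (x3 - xo) * (z4 - zo)) ((x3 - xo) * (y4 - yo) - (y3 - yo) * (x4 - xo)) hw hx hy hz.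
  move=> ->; congr (lam * _).
  transitivity (w1 * (det3 (x3 - xo) (y3 - yo) (z3 - zo) (x4 - xo) (y4 - yo) (z4 - zo) (x1 - xo) (y1 - yo) (z1 - zo)) + w2 * (det3 (x3 - xo) (y3 - yo) (z3 - zo) (x4 - xo) (y4 - yo) (z4 - zo) (x2 - xo) (y2 - yo) (z2 - zo))); first by rewrite /det3; ring.
  rewrite j341 j342 /D; ring.
have k41 : ((x4 - xo) * (y1 - yo) - (y4 - yo) * (x1 - xo)) * s = lam * ((w2 * l4 + w3 * l3) * D).
  have := @dotX R xo yo zo x1 y1 z1 x2 y2 z2 x3 y3 z3 x4 y4 z4 w1 w2 w3 w4 lam s ((y4 - yo) * (z1 - zo) - (z4 - zo) * (y1 - yo)) ((z4 - zo) * (x1 - xo) - (x4 - xo) * (z1 - zo)) ((x4 - xo) * (y1 - yo) - (y4 - yo) * (x1 - xo)) hw hx hy hz.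
  move=> ->; congr (lam * _).
  transitivity (w2 * (det3 (x4 - xo) (y4 - yo) (z4 - zo) (x1 - xo) (y1 - yo) (z1 - zo) (x2 - xo) (y2 - yo) (z2 - zo)) + w3 * (det3 (x4 - xo) (y4 - yo) (z4 - zo) (x1 - xo) (y1 - yo) (z1 - zo) (x3 - xo) (y3 - yo) (z3 - zo))); first by rewrite /det3; ring.
  rewrite j412 j413 /D; ring.
have hD : D != 0.
  apply/eqP => hD0; apply: hnp; transitivity (- D); first by rewrite /dot /cross /psub /= /D /det3; ring.
  by rewrite hD0 oppr0.
have hl : lam != 0 by rewrite gt_eqF.
have fin : forall (M a : R), M * s = lam * (a * D) -> 0 < a -> M != 0.
  move=> M a hk ha; apply/eqP => hM0; move: hk; rewrite hM0 mul0r => /esym /eqP.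
  by rewrite !mulf_eq0 (negbTE hl) (negbTE hD) gt_eqF.
split; first by apply: (fin _ _ k12); rewrite mulr1; apply: addr_gt0 => //; exact: mulr_gt0.
split; first by apply: (fin _ _ k23); rewrite mulr1; apply: addr_gt0 => //; exact: mulr_gt0.
split; first by apply: (fin _ _ k34); apply: addr_gt0; exact: mulr_gt0.
by apply: (fin _ _ k41); apply: addr_gt0; exact: mulr_gt0.
Qed.


Lemma face_nv {R : realType} (m n : nat) (F : net R) :
  dual_convex m n F -> forall a b, (a < m)%N -> (b < n)%N ->
  pz (cross (psub (F a.+1 b) (F a b)) (psub (F a.+1 b.+1) (F a b))) != 0.
Proof.
move=> [hnet [hm [hn hdc]]] a b ha hb.
case: (ltnP a.+1 m) => hA; case: (ltnP b.+1 n) => hB.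
- have hnb : nonboundary m n a.+1 b.+1 by rewrite /nonboundary; repeat split; lia.
  have [Q1 [Q2 [Q3 [Q4 [hadm [h1 [h2 [h3 h4]]]]]]]] := hdc _ _ hnb.
  have [n1 [n2 [n3 n4]]] := angle_nv hadm.
  exact: (plane_nv h1 n1).
- have hnb : nonboundary m n a.+1 b by rewrite /nonboundary; repeat split; lia.
  have [Q1 [Q2 [Q3 [Q4 [hadm [h1 [h2 [h3 h4]]]]]]]] := hdc _ _ hnb.
  have [n1 [n2 [n3 n4]]] := angle_nv hadm.
  exact: (plane_nv h4 n4).
- have hnb : nonboundary m n a b.+1 by rewrite /nonboundary; repeat split; lia.
  have [Q1 [Q2 [Q3 [Q4 [hadm [h1 [h2 [h3 h4]]]]]]]] := hdc _ _ hnb.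
  have [n1 [n2 [n3 n4]]] := angle_nv hadm.
  exact: (plane_nv h2 n2).
- have hnb : nonboundary m n a b by rewrite /nonboundary; repeat split; lia.
  have [Q1 [Q2 [Q3 [Q4 [hadm [h1 [h2 [h3 h4]]]]]]]] := hdc _ _ hnb.
  have [n1 [n2 [n3 n4]]] := angle_nv hadm.
  exact: (plane_nv h3 n3).
Qed.


Lemma edges_top {R : realType} (P1 P2 P3 P4 : pt R) :
  convex_quad P1 P2 P3 P4 -> pz (cross (psub P2 P1) (psub P3 P1)) != 0 ->
  ~ (px P2 = px P1 /\ py P2 = py P1) /\ ~ (px P3 = px P2 /\ py P3 = py P2) /\
  ~ (px P4 = px P3 /\ py P4 = py P3).
Proof.
case: P1 => x1 y1 z1; case: P2 => x2 y2 z2; case: P3 => x3 y3 z3; case: P4 => x4 y4 z4.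
rewrite /convex_quad /cross /psub /pscale /= => -[_ [l2 [l3 [l4 [hl2 [_ [_ [h2 _]]]]]]]] hN.
case: h2 => _ _ h2z.
split; last split.
- move=> /= [ex ey]; move/eqP: hN; apply; rewrite ex ey; ring.
- move=> /= [ex ey]; move/eqP: hN; apply; rewrite ex ey; ring.
- move=> /= [ex ey]; move: h2z; rewrite ex ey => h.
  have e : l2 * ((x2 - x1) * (y3 - y1) - (y2 - y1) * (x3 - x1)) = 0 by lra.
  move/eqP: e; rewrite mulf_eq0 (gt_eqF hl2) /= => /eqP e.
  by rewrite e eqxx in hN.
Qed.

Lemma motion_agree {R : realType} (phi c1 c2 b1 b2 b3 phi' c1' c2' b1' b2' b3' : R)
  (P Q : pt R) :
  cong_map phi c1 c2 b1 b2 b3 P = cong_map phi' c1' c2' b1' b2' b3' P ->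
  cong_map phi c1 c2 b1 b2 b3 Q = cong_map phi' c1' c2' b1' b2' b3' Q ->
  ~ (px P = px Q /\ py P = py Q) ->
  cos phi = cos phi' /\ sin phi = sin phi' /\ b1 = b1' /\ b2 = b2'.
Proof.
case: P => xp yp zp; case: Q => xq yq zq; rewrite /cong_map /=.
case=> hpx hpy _; case=> hqx hqy _ hne.
set c := cos phi in hpx hpy hqx hqy *; set s := sin phi in hpx hpy hqx hqy *.
set c' := cos phi' in hpx hpy hqx hqy *; set s' := sin phi' in hpx hpy hqx hqy *.
have e1 : (c - c') * (xp - xq) - (s - s') * (yp - yq) = 0 by lra.
have e2 : (s - s') * (xp - xq) + (c - c') * (yp - yq) = 0 by lra.
have hd : (xp - xq) ^+ 2 + (yp - yq) ^+ 2 != 0.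
  apply/negP => /eqP hd; apply: hne.
  have hx : (xp - xq) ^+ 2 = 0 by have := sqr_ge0 (xp - xq); have := sqr_ge0 (yp - yq); lra.
  have hy : (yp - yq) ^+ 2 = 0 by have := sqr_ge0 (xp - xq); have := sqr_ge0 (yp - yq); lra.
  move/eqP: hx; rewrite sqrf_eq0 subr_eq0 => /eqP ->.
  by move/eqP: hy; rewrite sqrf_eq0 subr_eq0 => /eqP ->.
have ec : (c - c') * ((xp - xq) ^+ 2 + (yp - yq) ^+ 2) = 0.
  have -> : (c - c') * ((xp - xq) ^+ 2 + (yp - yq) ^+ 2) =
    (xp - xq) * ((c - c') * (xp - xq) - (s - s') * (yp - yq)) +
    (yp - yq) * ((s - s') * (xp - xq) + (c - c') * (yp - yq)) by ring.
  by rewrite e1 e2 !mulr0 addr0.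
have es : (s - s') * ((xp - xq) ^+ 2 + (yp - yq) ^+ 2) = 0.
  have -> : (s - s') * ((xp - xq) ^+ 2 + (yp - yq) ^+ 2) =
    - (yp - yq) * ((c - c') * (xp - xq) - (s - s') * (yp - yq)) +
    (xp - xq) * ((s - s') * (xp - xq) + (c - c') * (yp - yq)) by ring.
  by rewrite e1 e2 !mulr0 addr0.
move/eqP: ec; rewrite mulf_eq0 (negbTE hd) orbF subr_eq0 => /eqP ec.
move/eqP: es; rewrite mulf_eq0 (negbTE hd) orbF subr_eq0 => /eqP es.
rewrite ec es in hpx hpy *; split => //; split => //; split; lra.
Qed.


Definition Wit {R : realType} (F G : net R) i j (phi c1 c2 b1 b2 b3 : R) : Prop :=
  cong_map phi c1 c2 b1 b2 b3 (F i j) = G i j /\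
  cong_map phi c1 c2 b1 b2 b3 (F i.+1 j) = G i.+1 j /\
  cong_map phi c1 c2 b1 b2 b3 (F i.+1 j.+1) = G i.+1 j.+1 /\
  cong_map phi c1 c2 b1 b2 b3 (F i j.+1) = G i j.+1.

Lemma fc_wit {R : realType} (F G : net R) i j :
  faces_congruent F G i j -> exists phi c1 c2 b1 b2 b3, Wit F G i j phi c1 c2 b1 b2 b3.
Proof.
move=> [f [[phi [c1 [c2 [b1 [b2 [b3 hf]]]]]] [h1 [h2 [h3 h4]]]]].
exists phi, c1, c2, b1, b2, b3; rewrite /Wit -!hf; by [].
Qed.

Lemma neq_top_sym {R : realType} (P Q : pt R) :
  ~ (px P = px Q /\ py P = py Q) -> ~ (px Q = px P /\ py Q = py P).
Proof. by move=> h [h1 h2]; apply: h. Qed.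

Lemma cm_top {R : realType} (phi c1 c2 b1 b2 b3 c s b1' b2' : R) (P Q : pt R) :
  cong_map phi c1 c2 b1 b2 b3 P = Q -> cos phi = c -> sin phi = s -> b1 = b1' -> b2 = b2' ->
  px Q = c * px P - s * py P + b1' /\ py Q = s * px P + c * py P + b2'.
Proof. by move=> <- <- <- <- <-. Qed.

Lemma rigid {R : realType} (m n : nat) (F G : net R) :
  dual_convex m n F ->
  (forall i j, (i < m)%N -> (j < n)%N -> faces_congruent F G i j) ->
  exists phi b1 b2, forall i j, (i <= m)%N -> (j <= n)%N ->
    px (G i j) = cos phi * px (F i j) - sin phi * py (F i j) + b1 /\
    py (G i j) = sin phi * px (F i j) + cos phi * py (F i j) + b2.
Proof.
move=> hdc hfc.
have hnv := face_nv hdc.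
have [hnet [hm [hn _]]] := hdc.
have hm0 : (0 < m)%N by lia.
have hn0 : (0 < n)%N by lia.
have [phi [c1 [c2 [b1 [b2 [b3 W0]]]]]] := fc_wit (hfc 0%N 0%N hm0 hn0).
have claim : forall i j, (i < m)%N -> (j < n)%N ->
  forall phi' c1' c2' b1' b2' b3', Wit F G i j phi' c1' c2' b1' b2' b3' ->
  cos phi' = cos phi /\ sin phi' = sin phi /\ b1' = b1 /\ b2' = b2.
  elim=> [|i IHi].
  - elim=> [|j IHj].
    + move=> _ _ phi' c1' c2' b1' b2' b3' [w1 [w2 _]].
      have [e1 [e2 _]] := edges_top (hnet 0%N 0%N hm0 hn0) (hnv 0%N 0%N hm0 hn0).
      apply: (motion_agree (etrans w1 (esym W0.1)) (etrans w2 (esym W0.2.1))).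
      exact: neq_top_sym.
    + move=> hi hj phi' c1' c2' b1' b2' b3' [w1 [w2 _]].
      have hj' : (j < n)%N by lia.
      have [p [d1 [d2 [a1 [a2 [a3 Wo]]]]]] := fc_wit (hfc 0%N j hi hj').
      have [g1 [g2 [g3 g4]]] := IHj hi hj' _ _ _ _ _ _ Wo.
      have [_ [_ e3]] := edges_top (hnet 0%N j hi hj') (hnv 0%N j hi hj').
      have [f1 [f2 [f3 f4]]] := motion_agree (etrans w1 (esym Wo.2.2.2))
        (etrans w2 (esym Wo.2.2.1)) e3.
      by rewrite f1 f2 f3 f4.
  - move=> j hi hj phi' c1' c2' b1' b2' b3' [w1 [_ [_ w4]]].
    have hi' : (i < m)%N by lia.
    have [p [d1 [d2 [a1 [a2 [a3 Wo]]]]]] := fc_wit (hfc i j hi' hj).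
    have [g1 [g2 [g3 g4]]] := IHi j hi' hj _ _ _ _ _ _ Wo.
    have [_ [e2 _]] := edges_top (hnet i j hi' hj) (hnv i j hi' hj).
    have [f1 [f2 [f3 f4]]] := motion_agree (etrans w1 (esym Wo.2.1))
      (etrans w4 (esym Wo.2.2.1)) (neq_top_sym e2).
    by rewrite f1 f2 f3 f4.
exists phi, b1, b2 => i j hi hj.
case: (ltnP i m) => hi'; case: (ltnP j n) => hj'.
- have [p [d1 [d2 [a1 [a2 [a3 Wo]]]]]] := fc_wit (hfc i j hi' hj').
  have [g1 [g2 [g3 g4]]] := claim i j hi' hj' _ _ _ _ _ _ Wo.
  exact: (cm_top Wo.1 g1 g2 g3 g4).
- have -> : j = n.-1.+1 by lia.
  have hj2 : (n.-1 < n)%N by lia.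
  have [p [d1 [d2 [a1 [a2 [a3 Wo]]]]]] := fc_wit (hfc i n.-1 hi' hj2).
  have [g1 [g2 [g3 g4]]] := claim i n.-1 hi' hj2 _ _ _ _ _ _ Wo.
  exact: (cm_top Wo.2.2.2 g1 g2 g3 g4).
- have -> : i = m.-1.+1 by lia.
  have hi2 : (m.-1 < m)%N by lia.
  have [p [d1 [d2 [a1 [a2 [a3 Wo]]]]]] := fc_wit (hfc m.-1 j hi2 hj').
  have [g1 [g2 [g3 g4]]] := claim m.-1 j hi2 hj' _ _ _ _ _ _ Wo.
  exact: (cm_top Wo.2.1 g1 g2 g3 g4).
- have -> : i = m.-1.+1 by lia.
  have -> : j = n.-1.+1 by lia.
  have hi2 : (m.-1 < m)%N by lia.
  have hj2 : (n.-1 < n)%N by lia.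
  have [p [d1 [d2 [a1 [a2 [a3 Wo]]]]]] := fc_wit (hfc m.-1 n.-1 hi2 hj2).
  have [g1 [g2 [g3 g4]]] := claim m.-1 n.-1 hi2 hj2 _ _ _ _ _ _ Wo.
  exact: (cm_top Wo.2.2.1 g1 g2 g3 g4).
Qed.


Lemma curv_Tr {R : realType} (H K : net R) (c s b1 b2 : R) (i j : nat) :
  c ^+ 2 + s ^+ 2 = 1 ->
  (forall k l, (k <= i.+1)%N -> (l <= j.+1)%N -> K k l = Tr c s b1 b2 (H k l)) ->
  (0 < i)%N -> (0 < j)%N -> curvature K i j = curvature H i j.
Proof.
move=> hcs eK; case: i eK => // i; case: j => // j eK _ _.
rewrite /curvature !face_dualE /=.
rewrite !eK //; try lia.
have [a1 a2] := fdual_Tr b1 b2 (H i j) (H i.+1 j) (H i.+1 j.+1) hcs.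
have [a3 a4] := fdual_Tr b1 b2 (H i.+1 j) (H i.+2 j) (H i.+2 j.+1) hcs.
have [a5 a6] := fdual_Tr b1 b2 (H i.+1 j.+1) (H i.+2 j.+1) (H i.+2 j.+2) hcs.
have [a7 a8] := fdual_Tr b1 b2 (H i j.+1) (H i.+1 j.+1) (H i.+1 j.+2) hcs.
by rewrite (det_top_rot hcs a1 a2 a3 a4) (det_top_rot hcs a3 a4 a5 a6)
  (det_top_rot hcs a5 a6 a7 a8) (det_top_rot hcs a7 a8 a1 a2).
Qed.


Lemma pt_eta {R : realType} (p : pt R) : p = Pt (px p) (py p) (pz p).
Proof. by case: p. Qed.

Lemma wit_sh {R : realType} (phi c1 c2 b1 b2 b3 : R) (P Q : pt R) :
  cong_map phi c1 c2 b1 b2 b3 P = Q -> Pt (px P) (py P) (pz Q) = sh c1 c2 b3 P.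
Proof. by move=> <-. Qed.

Lemma wit_cm0 {R : realType} (phi c1 c2 b1 b2 b3 : R) (P Q : pt R) :
  cong_map phi c1 c2 b1 b2 b3 P = Q ->
  cong_map 0 c1 c2 0 0 b3 P = Pt (px P) (py P) (pz Q).
Proof. move=> <-; rewrite /cong_map cos0 sin0 /=; congr Pt; ring. Qed.

Theorem lemma9 (R : realType) (m n : nat) (F : net R) :
  dual_convex m n F ->
  (flexible m n F <->
   exists Ft : R -> net R,
     iso_isometric_deformation m n F Ft /\ ~ trivial_deformation m n F Ft /\
     (forall t : R, 0 <= t <= 1 -> v_parallel m n F (Ft t))).
Proof.
move=> hdc; split; last first.
  by move=> [Ft [h1 [h2 _]]]; exists Ft.
move=> [Ft [hdef hnt]].
have [hnetF _] := hdc.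
pose G := fun (t : R) (i j : nat) => Pt (px (F i j)) (py (F i j)) (pz (Ft t i j)).
have [h0 [hcont hprop]] := hdef.
exists G; split; [|split].
- split; [|split].
  + move=> i j hi hj; rewrite /G (h0 i j hi hj); by case: (F i j).
  + move=> i j hi hj; have [_ [_ hz]] := hcont i j hi hj.
    split; [|split]; last exact: hz.
      rewrite /G /= => x; refine (@continuous_subspaceT R R (@unit_int R) (fun=> px (F i j)) (@cst_continuous R R (px (F i j))) x).
    rewrite /G /= => x; refine (@continuous_subspaceT R R (@unit_int R) (fun=> py (F i j)) (@cst_continuous R R (py (F i j))) x).
  + move=> t ht; have [hnetT [hfcT hcurT]] := hprop t ht.
    split; [|split].
    * move=> i j hi hj.
      have [p [d1 [d2 [a1 [a2 [a3 [w1 [w2 [w3 w4]]]]]]]]] := fc_wit (hfcT i j hi hj).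
      rewrite /G (wit_sh w1) (wit_sh w2) (wit_sh w3) (wit_sh w4).
      exact: convex_quad_sh (hnetF i j hi hj).
    * move=> i j hi hj.
      have [p [d1 [d2 [a1 [a2 [a3 [w1 [w2 [w3 w4]]]]]]]]] := fc_wit (hfcT i j hi hj).
      exists (cong_map 0 d1 d2 0 0 a3); split.
        by exists 0, d1, d2, 0, 0, a3.
      by rewrite /G (wit_cm0 w1) (wit_cm0 w2) (wit_cm0 w3) (wit_cm0 w4).
    * move=> i j hnb; rewrite -(hcurT i j hnb).
      have [phi [b1 [b2 hr]]] := rigid hdc hfcT.
      have [hi0 [him [hj0 hjn]]] := hnb.
      symmetry; apply: (@curv_Tr R (G t) (Ft t) (cos phi) (sin phi) b1 b2 i j) => //.
        by rewrite cos2Dsin2.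
      move=> k l hk hl.
      have [rx ry] := hr k l (leq_trans hk him) (leq_trans hl hjn).
      by rewrite (pt_eta (Ft t k l)) rx ry /Tr /G.
- move=> htriv; apply: hnt => t ht.
  have [g [[psi [d1 [d2 [e1 [e2 [e3 hg]]]]]] hgeq]] := htriv t ht.
  have [hnetT [hfcT _]] := hprop t ht.
  have [phi [b1 [b2 hr]]] := rigid hdc hfcT.
  exists (cong_map (phi + psi) d1 d2 (cos phi * e1 - sin phi * e2 + b1)
                   (sin phi * e1 + cos phi * e2 + b2) e3); split.
    by exists (phi + psi), d1, d2, (cos phi * e1 - sin phi * e2 + b1),
      (sin phi * e1 + cos phi * e2 + b2), e3.
  move=> i j hi hj.
  have := hgeq i j hi hj; rewrite hg /G /cong_map => -[ex ey ez].
  have [rx ry] := hr i j hi hj.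
  rewrite (pt_eta (Ft t i j)) rx ry cosD sinD; congr Pt.
  + set x := px (F i j) in ex ey *; set y := py (F i j) in ex ey *.
    transitivity (cos phi * (cos psi * x - sin psi * y + e1) -
                  sin phi * (sin psi * x + cos psi * y + e2) + b1).
      by rewrite -ex -ey.
    ring.
  + set x := px (F i j) in ex ey *; set y := py (F i j) in ex ey *.
    transitivity (sin phi * (cos psi * x - sin psi * y + e1) +
                  cos phi * (sin psi * x + cos psi * y + e2) + b2).
      by rewrite -ex -ey.
    ring.
  + exact: ez.
- by move=> t ht i j hi hj; split.
Qed.
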